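(* Let $N,M\ge 1$. Consider the coupled (single-topic) user–creator opinion dynamics $$\mathbf u^{t+1}=(I_N-\Lambda)A\,\mathbf u^{t}+\Lambda\,\mathbf u^{0}+(I_N-\Lambda)B\,\mathbf c^{t},\qquad \mathbf c^{t+1}=(I_M-\Gamma)E\,\mathbf c^{t}+\Gamma\,\mathbf c^{0}+(I_M-\Gamma)C\,\mathbf u^{t},\qquad t=0,1,2,\dots$$ with $\mathbf u^0\in[-1,1]^N$, $\mathbf c^0\in[-1,1]^M$ and with the matrices satisfying the standing assumptions described in the context (in particular, a static user partition). Then the users' opinions reach a steady state: there exists $\mathbf u^*\in\mathbb R^N$ such that $\lim_{t\to\infty}\mathbf u^t=\mathbf u^*$. Moreover, for every user $i\in\{1,\dots,N\}$, the influence of the social network on user $i$, namely $\sum_{j}A_{ij}$, and the influence of the recommended content on user $i$, namely $B_i:=\sum_{j}B_{ij}$, on $\mathbf u^*$ are complementary: $\sum_j A_{ij}+B_i=1$, so increasing one decreases the other.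
   Context: $\mathbf u^t=(u^t_1,\dots,u^t_N)^\top$ collects the opinions of $N$ users and $\mathbf c^t=(c^t_1,\dots,c^t_M)^\top$ those of $M$ content creators at time $t$. Standing assumptions: $\Lambda$ is an $N\times N$ diagonal matrix with diagonal entries $\lambda_i\in(0,1]$ (user stubbornness); $A\in[0,1]^{N\times N}$ is the (sub-stochastic) adjacency matrix of the users' social network, with nonzero diagonal entries ($A_{ij}>0$ means user $j$ influences user $i$). The user partition is static: each user $i$ is assigned to exactly one creator $j(i)$ (the set $\mathcal F_j$ of users consuming creator $j$ does not change over time). $B\in[0,1]^{N\times M}$ satisfies $B_{ij}=0$ whenever $j\neq j(i)$, and $[A\;B]\mathbf 1_{N+M}=\mathbf 1_N$, i.e. $\sum_j A_{ij}+\sum_j B_{ij}=1$ for each $i$. $\Gamma, E\in[0,1]^{M\times M}$ are diagonal matrices (creator stubbornness and creator self-influence), and $C\in[0,1]^{M\times N}$ satisfies $C_{ji}=0$ unless $i\in\mathcal F_j$, with $[E\;C]\mathbf 1_{M+N}=\mathbf 1_M$, i.e. $E_{jj}+\sum_i C_{ji}=1$ for each $j$. *)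

(* Defs.v *)
From HB Require Import structures.
From mathcomp Require Import all_boot all_order all_algebra.
From mathcomp Require Export all_classical all_reals all_analysis.
Set Implicit Arguments. Unset Strict Implicit. Unset Printing Implicit Defensive.
Import Order.TTheory GRing.Theory Num.Theory.
Local Open Scope ring_scope.

Definition diag_matrix (R : ringType) (n : nat) (D : 'M[R]_n) : Prop :=
  forall i j : 'I_n, i != j -> D i j = 0.

(* Main.v *)
Require Import Defs.
From HB Require Import structures.
From mathcomp Require Import all_boot all_order all_algebra.
From mathcomp Require Import all_classical all_reals all_analysis.
From mathcomp Require Import ring lra.
Import Order.TTheory GRing.Theory Num.Theory numFieldNormedType.Exports.
Local Open Scope classical_set_scope.
Local Open Scope ring_scope.


Set Implicit Arguments.
Unset Strict Implicit.

Lemma diag_mul (R : ringType) n m (D : 'M[R]_n) (X : 'M[R]_(n, m)) :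
  diag_matrix D -> forall i j, (D *m X) i j = D i i * X i j.
Proof.
move=> hD i j; rewrite mxE (bigD1 i) //= big1 ?addr0 // => k hk.
by rewrite hD ?mul0r // eq_sym.
Qed.

Lemma diag_1B (R : ringType) n (D : 'M[R]_n) :
  diag_matrix D -> diag_matrix (1%:M - D).
Proof. by move=> hD i j ij; rewrite !mxE (negbTE ij) hD // subr0. Qed.

Lemma entry_add (R : ringType) n m (X Y : 'M[R]_(n, m)) i j :
  (X + Y) i j = X i j + Y i j.
Proof. by rewrite mxE. Qed.


HB.instance Definition _ (R : realType) (m n : nat) :=
  Uniform_isComplete.Build 'M[R]_(m, n) (@mx_complete R m n).

Lemma cvg_of_geom (R : realType) n (u : nat -> 'cV[R]_n) (K r : R) :
  0 <= r < 1 -> (forall t, `|u t.+1 - u t| <= K * r ^+ t) ->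
  exists l : 'cV[R]_n, u @ \oo --> l.
Proof.
move=> /andP[r0 r1] hb.
have hcs : cvgn (series (telescope u)).
  apply: normed_cvg.
  rewrite /normed_series_of.
  apply: (@series_le_cvg R (fun t => `|telescope u t|) (geometric K r)).
  - by move=> t; rewrite /= normr_ge0.
  - by move=> t; apply: le_trans (normr_ge0 _) (hb t).
  - by move=> t; exact: hb t.
  - by apply: is_cvg_geometric_series; rewrite ger0_norm.
have : cvgn (fun t => u 0%N + series (telescope u) t).
  by apply: is_cvgD; [exact: is_cvg_cst | exact: hcs].
have -> : (fun t => u 0%N + series (telescope u) t) = u.
  by apply/funext => t; rewrite -eq_sum_telescope.
by move=> hc; exists (limn u); exact: hc.
Qed.

Theorem theorem1 (R : realType) (N M : nat) (hN : (0 < N)%N) (hM : (0 < M)%N)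
  (Lam : 'M[R]_N) (A : 'M[R]_N) (B : 'M[R]_(N, M))
  (Gam : 'M[R]_M) (E : 'M[R]_M) (C : 'M[R]_(M, N))
  (part : 'I_N -> 'I_M)
  (u : nat -> 'cV[R]_N) (c : nat -> 'cV[R]_M)
  (* Lambda: diagonal, entries in (0,1] *)
  (hLd : diag_matrix Lam)
  (hL : forall i, 0 < Lam i i <= 1)
  (* A: entries in [0,1], nonzero diagonal *)
  (hA : forall i j, 0 <= A i j <= 1)
  (hAd : forall i, A i i != 0)
  (* B: entries in [0,1], supported on the static partition *)
  (hB : forall i j, 0 <= B i j <= 1)
  (hBp : forall i j, j != part i -> B i j = 0)
  (hAB : forall i, \sum_j A i j + \sum_j B i j = 1)
  (* Gamma, E: diagonal with entries in [0,1] *)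
  (hGd : diag_matrix Gam) (hG : forall j k, 0 <= Gam j k <= 1)
  (hEd : diag_matrix E) (hE : forall j k, 0 <= E j k <= 1)
  (* C: entries in [0,1], C j i = 0 unless user i consumes creator j *)
  (hC : forall j i, 0 <= C j i <= 1)
  (hCp : forall j i, part i != j -> C j i = 0)
  (hEC : forall j, E j j + \sum_i C j i = 1)
  (* initial opinions in [-1,1] *)
  (hu0 : forall i, -1 <= u 0%N i 0 <= 1)
  (hc0 : forall j, -1 <= c 0%N j 0 <= 1)
  (* dynamics *)
  (hu : forall t, u t.+1 = (1%:M - Lam) *m A *m u t + Lam *m u 0%N
                           + (1%:M - Lam) *m B *m c t)
  (hc : forall t, c t.+1 = (1%:M - Gam) *m E *m c t + Gam *m c 0%N
                           + (1%:M - Gam) *m C *m u t) :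
  (exists ustar : 'cV[R]_N, u @ \oo --> ustar) /\
  (forall i : 'I_N, \sum_j A i j + \sum_j B i j = 1).
Proof.
split; last exact: hAB.
have uE : forall t i, u t.+1 i 0 = (1 - Lam i i) * (\sum_k A i k * u t k 0 + \sum_k B i k * c t k 0) + Lam i i * u 0%N i 0.
  move=> t i; rewrite hu !entry_add -!mulmxA !(diag_mul _ (diag_1B hLd)) (diag_mul _ hLd).
  by rewrite !mxE eqxx mulrDr addrAC.
  idtac.
have cE : forall t j, c t.+1 j 0 = (1 - Gam j j) * (E j j * c t j 0 + \sum_k C j k * u t k 0) + Gam j j * c 0%N j 0.
  move=> t j; rewrite hc !entry_add -!mulmxA !(diag_mul _ (diag_1B hGd)) (diag_mul _ hGd) (diag_mul _ hEd).
  by rewrite !mxE eqxx mulrDr addrAC.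
pose du t i := u t.+1 i 0 - u t i 0.
pose dc t j := c t.+1 j 0 - c t j 0.
have mulsumB : forall n (a x y : 'I_n -> R),
    \sum_k a k * (x k - y k) = \sum_k a k * x k - \sum_k a k * y k.
  by move=> n a x y; rewrite -sumrB; apply: eq_bigr => k _; rewrite mulrBr.
have duE : forall t i, du t.+1 i =
    (1 - Lam i i) * (\sum_k A i k * du t k + \sum_k B i k * dc t k).
  by move=> t i; rewrite /du /dc (uE t.+1 i) (uE t i) !mulsumB; ring.
have dcE : forall t j, dc t.+1 j =
    (1 - Gam j j) * (E j j * dc t j + \sum_k C j k * du t k).
  by move=> t j; rewrite /du /dc (cE t.+1 j) (cE t j) !mulsumB; ring.
have hLam : forall i, 0 <= 1 - Lam i i < 1.
  by move=> i; have /andP[h1 h2] := hL i; apply/andP; split; lra.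
have sum_bound : forall n (a x : 'I_n -> R) b, (forall k, 0 <= a k) ->
    (forall k, `|x k| <= b) -> `|\sum_k a k * x k| <= (\sum_k a k) * b.
  move=> n a x b ha hx; rewrite mulr_suml; apply: le_trans (ler_norm_sum _ _ _) _.
  by apply: ler_sum => k _; rewrite normrM ger0_norm // ler_wpM2l.
pose f j := if (1 - Gam j j) * E j j < 1 then (1 - Gam j j) * E j j else 0.
have hf : forall j, 0 <= f j < 1.
  move=> j; rewrite /f; case: ifP => h; last by rewrite lexx ltr01.
  have /andP[? ?] := hG j j; have /andP[? ?] := hE j j.
  by rewrite h andbT mulr_ge0 // subr_ge0.
pose m := Order.max (\big[Order.max/0]_i (1 - Lam i i)) (\big[Order.max/0]_j f j).
have hm1 : m < 1.
  rewrite /m gt_max; apply/andP; split; apply/bigmax_ltP; split => //.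
    by move=> i _; case/andP: (hLam i).
  by move=> j _; case/andP: (hf j).
have hm0 : 0 <= m by rewrite /m le_max bigmax_ge_id.
have hLm : forall i, 1 - Lam i i <= m by move=> i; rewrite /m le_max le_bigmax.
have hfm : forall j, f j <= m by move=> j; rewrite /m le_max le_bigmax orbT.
pose Bnd t b := 0 <= b /\ (forall i, `|du t i| <= b) /\ (forall j, `|dc t j| <= b).
have mono : forall t b b', Bnd t b -> b <= b' -> Bnd t b'.
  move=> t b b' [b0 [h1 h2]] bb; split; first exact: le_trans bb.
  by split=> k; apply: le_trans bb.
have step_u : forall t b, Bnd t b -> forall i, `|du t.+1 i| <= m * b.
  move=> t b [b0 [hu' hc']] i; have /andP[l0 l1] := hLam i.
  rewrite duE normrM ger0_norm //.
  apply: (ler_pM l0 (normr_ge0 _) (hLm i)).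
  apply: le_trans (ler_normD _ _) _.
  rewrite -(mul1r b) -(hAB i) mulrDl; apply: lerD; apply: sum_bound => // k.
    by case/andP: (hA i k).
  by case/andP: (hB i k).
have deg : forall j, ~~ ((1 - Gam j j) * E j j < 1) -> forall t, dc t j = 0.
  move=> j; rewrite -leNgt => hj.
  have /andP[? ?] := hG j j; have /andP[? ?] := hE j j.
  have g0 : Gam j j = 0 by nra.
  have e1 : E j j = 1 by nra.
  have s0 : \sum_k C j k = 0 by have := hEC j; rewrite e1 => h; lra.
  have Hn : forall k, xpredT k -> 0 <= C j k by move=> k _; case/andP: (hC j k).
  have C0 : forall k, C j k = 0.
    by move=> k; apply: (psumr_eq0P Hn s0).
  have SC : forall x : 'I_N -> R, \sum_k C j k * x k = 0.
    by move=> x; apply: big1 => k _; rewrite C0 mul0r.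
  elim => [|t IH].
    by rewrite /dc (cE 0%N j) g0 e1 SC; ring.
  by rewrite dcE IH g0 e1 SC; ring.
have step_c : forall t j b b', 0 <= b -> (forall i, `|du t i| <= b) ->
    `|dc t j| <= b' -> `|dc t.+1 j| <= f j * b' + (1 - f j) * b.
  move=> t j b b' b0 hu' hc'.
  rewrite /f; case: ifP => h; last first.
    by rewrite (deg j (negbT h)) normr0 mul0r add0r subr0 mul1r.
  have /andP[? ?] := hG j j; have /andP[? ?] := hE j j.
  rewrite dcE normrM ger0_norm; last by rewrite subr_ge0.
  have H : `|E j j * dc t j + \sum_k C j k * du t k| <= E j j * b' + (1 - E j j) * b.
    apply: le_trans (ler_normD _ _) _; apply: lerD.
      by rewrite normrM ger0_norm // ler_wpM2l.
    have -> : 1 - E j j = \sum_k C j k by have := hEC j; lra.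
    by apply: sum_bound => // k; case/andP: (hC j k).
  apply: le_trans (ler_wpM2l _ H) _; first by rewrite subr_ge0.
  have : 0 <= b' by apply: le_trans (normr_ge0 _) hc'.
  nra.
have two : forall t b, Bnd t b -> Bnd t.+1 b /\ Bnd t.+2 ((m * (2 - m)) * b).
  move=> t b Hb; have [b0 [hu' hc']] := Hb.
  have hu1 := step_u t b Hb.
  have B1 : Bnd t.+1 b.
    split => //; split.
      by move=> i; have := hu1 i; nra.
    move=> j; have := step_c t j b b b0 hu' (hc' j).
    by have /andP[? ?] := hf j; nra.
  split => //.
  have hu2 := step_u t.+1 b B1.
  have mb0 : 0 <= m * b by rewrite mulr_ge0.
  split; first by rewrite mulr_ge0 // mulr_ge0 // subr_ge0; apply: le_trans (ltW hm1) _; lra.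
  split.
    move=> i; have := hu2 i; have : 0 <= (m * b) * (1 - m) by rewrite mulr_ge0 // subr_ge0 ltW.
    nra.
  move=> j; have := step_c t.+1 j (m * b) b mb0 hu1 (B1.2.2 j).
  have : 0 <= ((1 - m) * b) * (m - f j).
    by rewrite mulr_ge0 // ?mulr_ge0 // subr_ge0 // ltW.
  nra.
pose q := m * (2 - m).
pose r := (1 + q) / 2.
have q0 : 0 <= q by rewrite /q mulr_ge0 // subr_ge0; apply: le_trans (ltW hm1) _; lra.
have q1 : q < 1 by rewrite /q; nra.
have r0 : 0 < r by rewrite /r; lra.
have r1 : r < 1 by rewrite /r; lra.
have qr : q <= r * r by rewrite /r; nra.
pose K := \sum_i `|du 0%N i| + \sum_j `|dc 0%N j|.
have S1 : 0 <= \sum_i `|du 0%N i| by apply: sumr_ge0 => i _.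
have S2 : 0 <= \sum_j `|dc 0%N j| by apply: sumr_ge0 => i _.
have B0 : Bnd 0%N K.
  split; first by rewrite /K addr_ge0.
  split.
    move=> i; rewrite /K (bigD1 i) //=.
    have : 0 <= \sum_(k | k != i) `|du 0%N k| by apply: sumr_ge0 => k _.
    lra.
  move=> j; rewrite /K (bigD1 j) //=.
  have : 0 <= \sum_(k | k != j) `|dc 0%N k| by apply: sumr_ge0 => k _.
  lra.
pose K' := K / r.
have claim : forall t, Bnd t (K' * r ^+ t) /\ Bnd t.+1 (K' * r ^+ t.+1).
  elim => [|t [IH1 IH2]].
    rewrite expr0 mulr1 expr1 /K' divfK ?gt_eqF //; split; last exact: (two 0%N K B0).1.
    apply: (mono _ _ _ B0); rewrite ler_pdivlMr //.
    have := B0.1; nra.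
  split => //.
  apply: (mono _ _ _ (two t _ IH1).2).
  have X0 := IH1.1.
  rewrite -/q !exprS.
  move: X0; set X := K' * r ^+ t => X0.
  have -> : K' * (r * (r * r ^+ t)) = (r * r) * X by rewrite /X; ring.
  by apply: ler_wpM2r.
apply: (@cvg_of_geom R N u K' r); first by rewrite ltW.
move=> t; have [h0 [h1 _]] := (claim t).1.
rewrite [leLHS]/Num.Def.normr /= mx_normrE.
apply: bigmax_le => // -[i j] _ /=.
by rewrite (ord1 j) !mxE; exact: h1 i.
Qed.
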